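(* Let $\delta^{*}_{1/2}$ be the decision rule \[ \delta^{*}_{1/2}(\mathbf{y},u)=\begin{cases}1 & \text{if } \sum_{i=1}^{n} w_i^{*} y_i > C^{*},\\ 0 & \text{if } \sum_{i=1}^{n} w_i^{*} y_i < C^{*},\\ u & \text{if } \sum_{i=1}^{n} w_i^{*} y_i = C^{*},\end{cases} \qquad w_i^{*}=2\log\!\left(\frac{\gamma_i}{1-\gamma_i}\right),\quad C^{*}=\sum_{i=1}^{n}\frac{w_i^{*}}{2}. \] This is the Bayes decision rule for the prior $P(\theta=1)=c=\tfrac12$, for which $\log\frac{1-c}{c}=0$. Then $\delta^{*}_{1/2}$ has constant risk in $\theta$ and is a minimax decision rule.
   Context: The setting is a crowdsourcing problem with known expert accuracies. The unknown quantity is $\theta\in\{0,1\}$, and the observations are expert opinions $\mathbf{Y}=(Y_1,\ldots,Y_n)\in\{0,1\}^n$ together with a fair coin flip $U\sim\text{Bernoulli}(1/2)$ that is independent of $\mathbf{Y}$. The following assumptions hold: - $Y_1,\ldots,Y_n$ are independent conditionally on $\theta$. - $\gamma_i:=P(Y_i=1\mid\theta=1)=P(Y_i=0\mid\theta=0)$ is known for each $i$. - $n$ is odd. A decision rule is a map $\delta:\{0,1\}^n\times\{0,1\}\to\{0,1\}$. The loss is $L(\theta,a)=\mathbb{I}(\theta\neq a)$, and the risk is $R(\delta,\theta)=\mathbb{E}[L(\delta(\mathbf{Y},U),\theta)\mid\theta]$. A rule $\delta^*$ is minimax if $\sup_\theta R(\delta^*,\theta)=\inf_\delta\sup_\theta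 R(\delta,\theta)$. *)

(* Defs.v *)
From HB Require Import structures.
From mathcomp Require Import all_boot all_order all_algebra.
From mathcomp Require Import reals exp.
Set Implicit Arguments. Unset Strict Implicit. Unset Printing Implicit Defensive.
Import Order.TTheory GRing.Theory Num.Theory.
Local Open Scope ring_scope.

Section Crowd.
Variables (R : realType) (n : nat) (gamma : 'I_n -> R).

(* observation vector y in {0,1}^n, encoded as booleans (true = 1) *)
Definition obs := {ffun 'I_n -> bool}.

Definition rule := obs -> bool -> bool.

Definition lik (th : bool) (y : obs) : R :=
  \prod_(i < n) (if y i == th then gamma i else 1 - gamma i).

(* R(delta, theta) = E[ 1(delta(Y,U) <> theta) | theta ], U ~ Bernoulli(1/2)
   independent of Y *)
Definition risk (delta : rule) (th : bool) : R :=
  \sum_(y : obs) \sum_(u : bool)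
     lik th y * (1 / 2) * (if delta y u != th then 1 else 0).

Definition wstar (i : 'I_n) : R := 2 * ln (gamma i / (1 - gamma i)).

Definition Cstar : R := \sum_(i < n) wstar i / 2.

Definition delta_star : rule := fun y u =>
  let s := \sum_(i < n) wstar i * (y i : nat)%:R in
  if Cstar < s then true else if s < Cstar then false else u.

End Crowd.

(* Main.v *)
Require Import Defs.
From HB Require Import structures.
From mathcomp Require Import all_boot all_order all_algebra.
From mathcomp Require Import reals exp.
From mathcomp Require Import ring lra.
Import Order.TTheory GRing.Theory Num.Theory.
Local Open Scope ring_scope.

Section Proof.
Variables (R : realType) (n : nat) (gamma : 'I_n -> R).
Hypothesis hg : forall i, 0 < gamma i < 1.

Let fac (th : bool) (y : obs n) i : R := if y i == th then gamma i else 1 - gamma i.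

Lemma fac_gt0 th y i : 0 < fac th y i.
Proof. have := hg i; rewrite /fac; case: ifP => _ /andP[a b]; lra. Qed.

Lemma lik_ln th y : 0 < lik gamma th y /\ ln (lik gamma th y) = \sum_(i < n) ln (fac th y i).
Proof.
rewrite /lik.
apply: (big_rec2 (fun x z => 0 < x /\ ln x = z)); first by rewrite ln1.
move=> i x z _ [x0 <-]; split; first by rewrite mulr_gt0 // fac_gt0.
by rewrite lnM // posrE ?fac_gt0.
Qed.

Lemma s_minus_C (y : obs n) :
  \sum_(i < n) wstar gamma i * (y i : nat)%:R - Cstar gamma =
  ln (lik gamma true y) - ln (lik gamma false y).
Proof.
rewrite (lik_ln true y).2 (lik_ln false y).2 /Cstar -!sumrB.
apply: eq_bigr => i _; rewrite /fac /wstar.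
have := hg i => /andP[a b].
rewrite ln_div ?posrE; [|lra|lra].
by case: (y i) => /=; rewrite ?mulr1 ?mulr0; field.
Qed.

Lemma dstar_char (y : obs n) u : delta_star gamma y u =
  if lik gamma false y < lik gamma true y then true
  else if lik gamma true y < lik gamma false y then false else u.
Proof.
have [p1 _] := lik_ln true y; have [p0 _] := lik_ln false y.
have e := s_minus_C y.
rewrite /delta_star /=.
set s := \sum_(i < n) _ in e *.
have -> : (Cstar gamma < s) = (lik gamma false y < lik gamma true y).
  rewrite -[X in _ = X]ltr_ln ?posrE //; apply/idP/idP; lra.
have -> : (s < Cstar gamma) = (lik gamma true y < lik gamma false y).
  rewrite -[X in _ = X]ltr_ln ?posrE //; apply/idP/idP; lra.
by [].
Qed.

Definition compl (y : obs n) : obs n := [ffun i => ~~ y i].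

Lemma compl_inj : injective compl.
Proof. move=> a b /ffunP h; apply/ffunP => i; move: (h i); rewrite !ffunE; by case: (a i); case: (b i). Qed.

Lemma lik_compl th (y : obs n) : lik gamma th (compl y) = lik gamma (~~ th) y.
Proof.
apply: eq_bigr => i _; rewrite ffunE; by case: (y i); case: th.
Qed.

Lemma dstar_compl (y : obs n) u : delta_star gamma (compl y) (~~ u) = ~~ delta_star gamma y u.
Proof.
rewrite !dstar_char !lik_compl /=.
by case: (ltgtP (lik gamma true y) (lik gamma false y)).
Qed.

Lemma risk_sym : risk gamma (delta_star gamma) true = risk gamma (delta_star gamma) false.
Proof.
rewrite /risk (reindex_inj compl_inj); apply: eq_bigr => y _.
rewrite (reindex_inj (can_inj negbK)); apply: eq_bigr => u _.
by rewrite lik_compl dstar_compl; case: (delta_star gamma y u).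
Qed.

Lemma risk_sum (d : rule n) : risk gamma d false + risk gamma d true =
  \sum_(y : obs n) \sum_(u : bool) (1/2) * (if d y u then lik gamma false y else lik gamma true y).
Proof.
rewrite /risk -big_split; apply: eq_bigr => y _.
rewrite -big_split; apply: eq_bigr => u _.
by case: (d y u) => /=; rewrite ?mulr1 ?mulr0 ?addr0 ?add0r mulrC.
Qed.

Lemma bayes (d : rule n) :
  risk gamma (delta_star gamma) false + risk gamma (delta_star gamma) true
  <= risk gamma d false + risk gamma d true.
Proof.
rewrite !risk_sum; apply: ler_sum => y _; apply: ler_sum => u _.
rewrite dstar_char.
have [p1 _] := lik_ln true y; have [p0 _] := lik_ln false y.
move: p0 p1; set a := lik gamma false y; set b := lik gamma true y.
clearbody a b => p0 p1.
by case: (d y u); case: (ltgtP a b) => h /=; case: u; rewrite ?h; lra.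
Qed.

End Proof.

Theorem theorem3 (R : realType) (n : nat) (gamma : 'I_n -> R) :
  odd n ->
  (forall i, 0 < gamma i < 1) ->
  (forall th th' : bool,
      risk gamma (delta_star gamma) th = risk gamma (delta_star gamma) th') /\
  (forall delta : rule n,
      Num.max (risk gamma (delta_star gamma) false)
              (risk gamma (delta_star gamma) true)
      <= Num.max (risk gamma delta false) (risk gamma delta true)).
Proof.
move=> _ hg.
have hs := @risk_sym R n gamma hg.
split.
  by case; case => //; rewrite hs.
move=> d; have hb := @bayes R n gamma hg d.
rewrite hs maxxx.
set a := risk gamma d false in hb *; set b := risk gamma d true in hb *.
rewrite hs in hb; move: hb; set r := risk gamma (delta_star gamma) false.
clearbody a b r => hb.
rewrite le_max; case: (leP b a) => h; apply/orP; [left|right]; lra.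
Qed.
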